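(* Let $\mathcal D_2^S$ be the family of all successor expansions of finite 2-pointed directed graphs $(D,s,t)$. The directed reachability query, i.e. the class of structures in $\mathcal D_2^S$ in which there is a directed path from $s$ to $t$, is breadth-first traversal-invariant definable over $\mathcal D_2^S$.
   Context: A 2-pointed directed graph $(D,s,t)$ is a finite directed graph (binary relation $E$) with two distinguished vertices. A successor expansion of it is $(D,s,t,\min,\max,S)$ where $S$ is a unary function which is the successor function of some linear order of the vertex set with least element $\min$ and greatest element $\max$; its signature is denoted $(\Gamma_2,S)$. Graphs (as targets) are finite and undirected; $\Gamma_n$ is the signature with a binary relation symbol $E$ and $n$ constants; an $n$-pointed graph is a graph with $n$ distinguished vertices. A linear order $<$ of the vertex set of a graph, listing vertices $v_1<\dots<v_n$, is a breadth-first traversal (BFT) if for each $i\ge2$, whenever some $v_j$ with $j<i$ has a neighbour outside $\{v_1,\dots,v_{i-1}\}$, $v_i$ is adjacent to $v_{j^*}$ for the least such $j^*$ (a visiting order of breadth-first search). Equivalently: for all $u<v<w$, $uEw$ implies some $x<v$ with $x\le u$ has $xEv$. A $k$-ary interpretation $\pi:\Gamma_n\to K$ consists of a first-order $K$-formula $\partial^\pi(\bar x)$ in a $k$-tuple of variables, a $K$-formula $E^\pi(\bar x,\bar y)$, and for each constant a definition by cases (cases $K$-formulas, values $k$-tuples of $K$-terms); $A^\pi$ has domain $\{\bar a\in A^k:A\models\partial^\pi(\bar a)\}$ and symbols interpreted by their translations. $\pi$ is left total from $\mathcal K$ to $\mathcal G'$ if $A^\pi\in\mathcal G'$ for all $A\in\mathcal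 K$. For a family $\mathcal G'$ of finite $n$-pointed graphs let $\mathcal B$ be the family of expansions $(G,<)$ with $G\in\mathcal G'$ and $<$ a BFT of $G$. A $\Gamma_n\cup\{<\}$-sentence $\varphi$ is $(\mathcal G',\mathcal B)$-invariant if $(G,<)\models\varphi\iff(H,<')\models\varphi$ whenever $(G,<),(H,<')\in\mathcal B$ and $G\cong H$; then $G\models(\mathfrak B<)\varphi$ means $(G,<)\models\varphi$ for some (equivalently every) BFT. A query $Q$ (isomorphism-closed subfamily) over a family $\mathcal K$ of $K$-structures is basic BFT-invariant definable if there are $n$, a family $\mathcal G'$ of finite $n$-pointed graphs, a $(\mathcal G',\mathcal B)$-invariant sentence $\varphi$ and an interpretation $\pi:\Gamma_n\to K$ left total from $\mathcal K$ to $\mathcal G'$ with $A\in Q\iff A^\pi\models(\mathfrak B<)\varphi$ for all $A\in\mathcal K$; $Q$ is BFT-invariant definable if it is a boolean combination of such queries. *)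

(* Defs.v *)
From mathcomp Require Import all_boot.
Set Implicit Arguments.
Unset Strict Implicit.
Unset Printing Implicit Defensive.

Record sstruct := SStruct {
  sV : finType;
  sE : rel sV;
  s_s : sV; s_t : sV; s_min : sV; s_max : sV;
  sS : sV -> sV }.
Arguments sE : clear implicits.
Arguments sS : clear implicits.

(* S is the successor function of a linear order (given by the
   enumeration [l]) with least element min and greatest element max;
   convention: S max = max. *)
Definition is_succ_expansion (A : sstruct) : Prop :=
  exists l : seq (sV A),
    [/\ uniq l, (forall v, v \in l),
        index (s_min A) l = 0 /\
        index (s_max A) l = (size l).-1,
        (forall u, index u l < (size l).-1 ->
                   index (sS A u) l = (index u l).+1) &
        sS A (s_max A) = s_max A].

Definition D2S (A : sstruct) : Prop := is_succ_expansion A.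

Inductive sterm := SVar of nat | Ts | Tt | Tmin | Tmax | TSucc of sterm.
Inductive sform :=
  | SEq of sterm & sterm
  | SEdge of sterm & sterm
  | SNot of sform
  | SAnd of sform & sform
  | SEx of nat & sform.

(* closed terms (used as values in definitions by cases) *)
Inductive cterm := Cs | Ct | Cmin | Cmax | CSucc of cterm.

Definition upd (T : Type) (e : nat -> option T) (x : nat) (v : T) :=
  fun y => if y == x then Some v else e y.

Section SourceSem.
Variable A : sstruct.

Fixpoint seval (e : nat -> option (sV A)) (t : sterm) : option (sV A) :=
  match t with
  | SVar x => e x
  | Ts => Some (s_s A) | Tt => Some (s_t A)
  | Tmin => Some (s_min A) | Tmax => Some (s_max A)
  | TSucc t => omap (sS A) (seval e t)
  end.

Fixpoint ssat (e : nat -> option (sV A)) (f : sform) : bool :=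
  match f with
  | SEq t1 t2 => if (seval e t1, seval e t2) is (Some a, Some b)
                 then a == b else false
  | SEdge t1 t2 => if (seval e t1, seval e t2) is (Some a, Some b)
                   then sE A a b else false
  | SNot f => ~~ ssat e f
  | SAnd f g => ssat e f && ssat e g
  | SEx x f => [exists v : sV A, ssat (upd e x v) f]
  end.

Fixpoint ceval (t : cterm) : sV A :=
  match t with
  | Cs => s_s A | Ct => s_t A | Cmin => s_min A | Cmax => s_max A
  | CSucc t => sS A (ceval t)
  end.

Definition env0 : nat -> option (sV A) := fun _ => None.

End SourceSem.

Record npgraph (np : nat) := NPGraph {
  gV : finType;
  gE : rel gV;
  gc : 'I_np -> gV }.
Arguments gE {np} G : rename.
Arguments gc {np} G : rename.

Definition is_graph n (G : npgraph n) : Prop :=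
  irreflexive (gE G) /\ symmetric (gE G).

Definition np_iso n (G H : npgraph n) : Prop :=
  exists f : gV G -> gV H,
    [/\ bijective f,
        (forall x y, gE H (f x) (f y) = gE G x y) &
        (forall i, f (gc G i) = gc H i)].

(* A linear order of the vertex set is represented by the enumeration
   l = [v_1; ...; v_m]; x < y iff index x l < index y l. *)
Definition is_enum (T : finType) (l : seq T) := uniq l /\ forall v, v \in l.

(* breadth-first traversal: for each v = v_i (i >= 2), if some earlier
   vertex has a neighbour outside {v_1..v_{i-1}}, then v_i is adjacent to
   the least such earlier vertex u = v_{j*}. *)
Definition is_BFT n (G : npgraph n) (l : seq (gV G)) : Prop :=
  is_enum l /\
  forall u v, index u l < index v l ->
    (exists w, gE G u w /\ index v l <= index w l) ->
    (forall u', index u' l < index u l ->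
       forall w, gE G u' w -> index w l < index v l) ->
    gE G u v.

Inductive tterm (n : nat) := TVar of nat | TConst of 'I_n.
Inductive tform (n : nat) :=
  | TEq of tterm n & tterm n
  | TEdge of tterm n & tterm n
  | TLt of tterm n & tterm n
  | TNot of tform n
  | TAnd of tform n & tform n
  | TEx of nat & tform n.

Section TargetSem.
Variables (n : nat) (G : npgraph n) (l : seq (gV G)).

Definition teval (e : nat -> option (gV G)) (t : tterm n) : option (gV G) :=
  match t with TVar x => e x | TConst i => Some (gc G i) end.

Fixpoint tsat (e : nat -> option (gV G)) (f : tform n) : bool :=
  match f with
  | TEq t1 t2 => if (teval e t1, teval e t2) is (Some a, Some b)
                 then a == b else false
  | TEdge t1 t2 => if (teval e t1, teval e t2) is (Some a, Some b)
                   then gE G a b else false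
  | TLt t1 t2 => if (teval e t1, teval e t2) is (Some a, Some b)
                 then index a l < index b l else false
  | TNot f => ~~ tsat e f
  | TAnd f g => tsat e f && tsat e g
  | TEx x f => [exists v : gV G, tsat (upd e x v) f]
  end.

End TargetSem.

Definition tenv0 n (G : npgraph n) : nat -> option (gV G) := fun _ => None.

Definition bsat n (G : npgraph n) (l : seq (gV G)) (phi : tform n) : bool :=
  tsat l (tenv0 G) phi.

Definition bft_invariant n (G' : npgraph n -> Prop) (phi : tform n) : Prop :=
  forall (G H : npgraph n) (l : seq (gV G)) (l' : seq (gV H)),
    G' G -> G' H -> is_BFT l -> is_BFT l' -> np_iso G H ->
    (bsat l phi <-> bsat l' phi).

Definition bft_models n (G : npgraph n) (phi : tform n) : Prop :=
  exists l : seq (gV G), is_BFT l /\ bsat l phi.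

(* The domain formula uses variables 0..k-1 (for x-bar); the edge formula
   uses 0..k-1 for x-bar and k..2k-1 for y-bar.  Each constant c_i is
   defined by cases: a list of (case sentence, k-tuple of closed terms). *)
Record interp (k n : nat) := Interp {
  i_dom : sform;
  i_edge : sform;
  i_cases : 'I_n -> seq (sform * ('I_k -> cterm)) }.

Section Interp.
Variables (k n : nat) (pi : interp k n) (A : sstruct).

Definition env1 (a : {ffun 'I_k -> sV A}) : nat -> option (sV A) :=
  fun i => omap a (insub i).
Definition env2 (a b : {ffun 'I_k -> sV A}) : nat -> option (sV A) :=
  fun i => if i < k then omap a (insub i) else omap b (insub (i - k)).

Definition in_dom (a : {ffun 'I_k -> sV A}) : bool := ssat (env1 a) (i_dom pi).

Definition dom_type := {a : {ffun 'I_k -> sV A} | in_dom a}.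

(* the case that holds (well-defined when exactly one case holds) *)
Definition case_holds (c : sform * ('I_k -> cterm)) : bool :=
  ssat (env0 A) c.1.

Definition const_val (i : 'I_n) : {ffun 'I_k -> sV A} :=
  let cs := i_cases pi i in
  let c := nth (SNot (SEq Tmin Tmin), fun _ => Cmin) cs (find case_holds cs) in
  [ffun j => ceval A (c.2 j)].

Definition cases_ok : Prop :=
  forall i, count case_holds (i_cases pi i) = 1.

Definition interp_struct (H : forall i, in_dom (const_val i)) : npgraph n :=
  @NPGraph n dom_type
    (fun a b => ssat (env2 (val a) (val b)) (i_edge pi))
    (fun i => exist _ (const_val i) (H i)).

End Interp.

Definition left_total k n (pi : interp k n) (K : sstruct -> Prop)
    (G' : npgraph n -> Prop) : Prop :=
  forall A, K A ->
    cases_ok pi A /\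
    exists H : (forall i, in_dom pi (const_val pi A i)),
      G' (interp_struct H).

Definition basic_bft_definable (K : sstruct -> Prop) (Q : sstruct -> Prop)
  : Prop :=
  exists (n : nat) (G' : npgraph n -> Prop) (phi : tform n) (k : nat)
         (pi : interp k n),
    [/\ (forall G, G' G -> is_graph G),
        bft_invariant G' phi,
        left_total pi K G' &
        forall A (HA : K A) (H : forall i, in_dom pi (const_val pi A i)),
          Q A <-> bft_models (interp_struct H) phi].

Inductive bft_definable (K : sstruct -> Prop) : (sstruct -> Prop) -> Prop :=
  | bftd_basic Q : basic_bft_definable K Q -> bft_definable K Q
  | bftd_not Q : bft_definable K Q -> bft_definable K (fun A => ~ Q A)
  | bftd_and Q1 Q2 : bft_definable K Q1 -> bft_definable K Q2 ->
      bft_definable K (fun A => Q1 A /\ Q2 A)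
  | bftd_ext Q Q' : bft_definable K Q ->
      (forall A, K A -> (Q A <-> Q' A)) -> bft_definable K Q'.

Definition reach_query (A : sstruct) : Prop := connect (sE A) (s_s A) (s_t A).

(* Main.v *)
Require Import Defs.
From mathcomp Require Import all_boot zify.
Set Implicit Arguments. Unset Strict Implicit. Unset Printing Implicit Defensive.

Section BFT.
Variables (n : nat) (G : npgraph n) (l : seq (gV G)).
Hypothesis Hl : is_BFT l.
Local Notation idx x := (index x l).
Local Notation e := (gE G).

Lemma idx_inj x y : idx x = idx y -> x = y.
Proof.
move=> h; have [_ al] := Hl.1.
by rewrite -(nth_index x (al x)) h nth_index.
Qed.

Lemma min_idx (P : pred (gV G)) x : P x ->
  exists u, P u /\ forall u', P u' -> idx u <= idx u'.
Proof.
move=> Px; case: (arg_minnP (fun u => idx u) Px) => u Pu H.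
by exists u.
Qed.

Definition restart z := forall w, idx w < idx z -> ~~ e w z.

Lemma restart_closed z : restart z ->
  forall u w, idx u < idx z -> e u w -> idx w < idx z.
Proof.
move=> rz u w uz euw; rewrite ltnNge; apply/negP => zw.
pose P := fun u => (idx u < idx z) && [exists w, e u w && (idx z <= idx w)].
have Pu : P u by rewrite /P uz /=; apply/existsP; exists w; rewrite euw.
have [u0 [/andP [u0z /existsP [w0 /andP [e0 w0z]]] min0]] := min_idx Pu.
have := rz u0 u0z; apply/negP; rewrite negbK.
apply: Hl.2 => //; first by exists w0.
move=> u' u'u0 w' eu'w'; rewrite ltnNge; apply/negP => zw'.
have : P u' by rewrite /P (ltn_trans u'u0 u0z) /=; apply/existsP; exists w'; rewrite eu'w'.
by move/min0; rewrite leqNgt u'u0.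
Qed.

Fixpoint within (r : gV G) (m : nat) (y : gV G) : bool :=
  if m is m'.+1 then within r m' y || [exists z, within r m' z && e z y]
  else y == r.

Lemma within0 r y : within r 0 y = (y == r). Proof. by []. Qed.
Lemma withinS r m y : within r m.+1 y = within r m y || [exists z, within r m z && e z y].
Proof. by []. Qed.

Lemma within_mono r m m' y : m <= m' -> within r m y -> within r m' y.
Proof.
elim: m' => [|m' IH]; first by rewrite leqn0 => /eqP ->.
rewrite leq_eqVlt => /orP [/eqP -> //|] /IH h w /=; by rewrite h.
Qed.

Lemma within_step r m z y : within r m z -> e z y -> within r m.+1 y.
Proof. by move=> wz ezy /=; apply/orP; right; apply/existsP; exists z; rewrite wz. Qed.

Lemma within_connect r m y : within r m y -> connect e r y.
Proof.
elim: m y => [|m IH] y /=; first by move/eqP ->.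
case/orP => [/IH //| /existsP [z /andP [wz ezy]]].
by apply: connect_trans (IH _ wz) (connect1 ezy).
Qed.

Lemma connect_within r y : connect e r y -> exists m, within r m y.
Proof.
case/connectP => p.
elim/last_ind: p y => [|p z IH] y /=; first by move=> _ ->; exists 0 => /=.
rewrite rcons_path last_rcons => /andP [pp ez] ->.
have [m wm] := IH _ pp erefl; exists m.+1; exact: within_step wm ez.
Qed.

Lemma within_before z r : restart z -> idx r < idx z ->
  forall m y, within r m y -> idx y < idx z.
Proof.
move=> rz rlt; elim=> [|m IH] y /=; first by move/eqP => ->.
case/orP => [/IH //| /existsP [w /andP [ww ewy]]].
exact: restart_closed rz _ _ (IH _ ww) ewy.
Qed.

Lemma bft_mono r : restart r -> forall m a b, within r m a ->
  idx r <= idx b -> idx b <= idx a -> within r m b.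
Proof.
move=> rr; elim=> [|m IH] a b /=.
  move/eqP -> => h1 h2; apply/eqP; apply: idx_inj; apply/eqP.
  by rewrite eqn_leq h1 h2.
case/orP => [wa rb ba| /existsP [z /andP [wz eza]] rb ba].
  by rewrite (IH a b wa rb ba).
case: (leqP (idx b) (idx z)) => bz.
  by rewrite (IH z b wz rb bz).
case: (eqVneq b a) => [-> | nba].
  by apply/orP; right; apply/existsP; exists z; rewrite wz.
have ba' : idx b < idx a.
  rewrite ltn_neqAle ba andbT; apply/negP => /eqP h.
  by move/eqP: nba; apply; apply: idx_inj.
pose Q := fun u => [exists w, e u w && (idx b <= idx w)].
have Qz : Q z by apply/existsP; exists a; rewrite eza ltnW.
have [u [/existsP [w /andP [euw bw]] minu]] := min_idx Qz.
have uz : idx u <= idx z by apply: minu.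
have eub : e u b.
  apply: Hl.2; first by apply: leq_ltn_trans uz bz.
    by exists w; rewrite euw.
  move=> u' u'u w' eu'w'; rewrite ltnNge; apply/negP => bw'.
  have : Q u' by apply/existsP; exists w'; rewrite eu'w'.
  by move/minu; rewrite leqNgt u'u.
have ru : idx r <= idx u.
  rewrite leqNgt; apply/negP => ur.
  have := restart_closed rr ur euw; rewrite ltnNge.
  by move/negP; apply; apply: leq_trans rb bw.
apply/orP; right; apply/existsP; exists u; rewrite eub andbT.
exact: IH wz ru uz.
Qed.

End BFT.

Section Exist.
Variables (n : nat) (G : npgraph n).
Local Notation e := (gE G).
Local Notation T := (gV G).

Definition prefBFT (p : seq T) := uniq p /\
  forall u v, v \in p -> index u p < index v p ->
    (exists w, e u w /\ index v p <= index w p) ->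
    (forall u', index u' p < index u p ->
       forall w, e u' w -> index w p < index v p) ->
    e u v.

Lemma idx_rcons_in (p : seq T) x y : y \in p -> index y (rcons p x) = index y p.
Proof. by move=> yp; rewrite -cats1 index_cat yp. Qed.

Lemma idx_rcons_out (p : seq T) x y : y \notin p -> size p <= index y (rcons p x).
Proof. by move=> yp; rewrite -cats1 index_cat (negbTE yp) leq_addr. Qed.

Lemma idx_out (p : seq T) y : y \notin p -> index y p = size p.
Proof. by move=> yp; apply: memNindex. Qed.

Lemma in_of_idx (p : seq T) y : index y p < size p -> y \in p.
Proof. by rewrite index_mem. Qed.

Lemma prefBFT_ext p x0 : prefBFT p -> x0 \notin p ->
  exists x, x \notin p /\ prefBFT (rcons p x).
Proof.
move=> [up hp] x0p.
pose P := fun u => (u \in p) && [exists w, e u w && (w \notin p)].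
have main : forall x, x \notin p ->
   (forall u, index u p < size p -> (exists w, e u w /\ w \notin p) ->
     (forall u', index u' p < index u p -> forall w, e u' w -> w \in p) -> e u x) ->
   prefBFT (rcons p x).
  move=> x xp hx; split; first by rewrite rcons_uniq xp.
  move=> u v; rewrite mem_rcons inE => /orP [/eqP -> | vp].
    have ->: index x (rcons p x) = size p.
      by rewrite -cats1 index_cat (negbTE xp) /= eqxx addn0.
    move=> us [w [euw ww]] h2.
    have up' : u \in p.
      by apply/negPn/negP => /(idx_rcons_out x); rewrite leqNgt us.
    rewrite (idx_rcons_in _ up') in us h2.
    apply: hx => //.
      exists w; split => //; apply/negP => wp.
      by move: ww; rewrite (idx_rcons_in _ wp) leqNgt index_mem wp.
    move=> u' u'u w' eu'w'; have := h2 u' _ w' eu'w'.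
    have u'p : u' \in p by rewrite -index_mem (ltn_trans u'u) // index_mem.
    rewrite (idx_rcons_in _ u'p) => /(_ u'u) hw.
    apply/negPn/negP => /(idx_rcons_out x); rewrite leqNgt hw.
    done.
  rewrite (idx_rcons_in _ vp) => uv.
  have vs : index v p < size p by rewrite index_mem.
  have up' : u \in p.
    by apply/negPn/negP => /(idx_rcons_out x); rewrite leqNgt (ltn_trans uv vs).
  rewrite (idx_rcons_in _ up') in uv *.
  move=> [w [euw vw]] h2; apply: hp => //.
    exists w; split => //; case: (boolP (w \in p)) => wp.
      by rewrite -(idx_rcons_in x wp).
    by rewrite (idx_out wp) ltnW.
  move=> u' u'u w' eu'w'.
  have u'p : u' \in p by rewrite -index_mem (ltn_trans u'u) // index_mem.
  have := h2 u' _ w' eu'w'; rewrite (idx_rcons_in _ u'p) => /(_ u'u) hw.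
  case: (boolP (w' \in p)) => wp; first by rewrite -(idx_rcons_in x wp).
  by move: hw; rewrite ltnNge (leq_trans (ltnW vs) (idx_rcons_out x wp)).
case: (pickP P) => [u0 Pu0 | noP].
  case: (arg_minnP (fun u => index u p) Pu0) => u /andP [up0 /existsP [w /andP [euw wp]]] minu.
  exists w; split => //; apply: main => // u' u's [w' [eu'w' w'p]] h2.
  have Pu' : P u'.
    rewrite /P; apply/andP; split; last by apply/existsP; exists w'; rewrite eu'w'.
    by rewrite -index_mem.
  have := minu _ Pu'; rewrite leq_eqVlt => /orP [/eqP h | h].
    have u'p : u' \in p by case/andP: Pu'.
    by move: euw; rewrite -(nth_index u up0) h nth_index.
  by have := h2 _ h _ euw; rewrite (negbTE wp).
exists x0; split => //; apply: main => // u us [w [euw wp]] _.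
have := noP u; rewrite /P.
have -> : u \in p by rewrite -index_mem.
by rewrite /=; move/negbT/existsPn/(_ w); rewrite euw wp.
Qed.

Lemma bft_exists : exists l : seq T, is_BFT l.
Proof.
have step : forall k, k <= #|T| -> exists p, prefBFT p /\ size p = k.
  elim=> [|k IH] hk; first by exists [::]; split => //; split => // u v.
  have [p [pp sp]] := IH (ltnW hk).
  case: (pickP (fun x => x \notin p)) => [x0 x0p | allp].
    have [x [xp px]] := prefBFT_ext pp x0p.
    by exists (rcons p x); rewrite size_rcons sp.
  have : size (enum T) <= size p.
    apply: uniq_leq_size; first exact: enum_uniq.
    by move=> x _; move: (allp x) => /negbFE.
  by rewrite -cardT sp leqNgt hk.
have [p [[up hp] sp]] := step _ (leqnn _).
have allp : forall v, v \in p.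
  move=> v; apply/negPn/negP => vp.
  have : size (v :: p) <= size (enum T).
    by apply: uniq_leq_size; rewrite /= ?vp ?up // => x _; rewrite mem_enum.
  by rewrite /= -cardT sp ltnn.
exists p; split; first by [].
by move=> u v; apply: hp.
Qed.
End Exist.

Section Iso.
Variables (n : nat) (G H : npgraph n) (f : gV G -> gV H).
Hypotheses (bf : bijective f) (ef : forall x y, gE H (f x) (f y) = gE G x y)
  (cf : forall i, f (gc G i) = gc H i).

Lemma tsat_iso (l : seq (gV G)) phi : forall e1 e2,
  (forall x, e2 x = omap f (e1 x)) ->
  tsat l e1 phi = tsat (map f l) e2 phi.
Proof.
have fi := bij_inj bf.
have tev : forall e1 e2 t, (forall x, e2 x = omap f (e1 x)) ->
   teval e2 t = omap f (teval e1 t).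
  by move=> e1 e2 [x|i] h //=; rewrite cf.
elim: phi => [t1 t2|t1 t2|t1 t2|p IH|p IHp q IHq|x p IH] e1 e2 h /=.
- rewrite !(tev e1 e2) //.
  by case: (teval e1 t1) => [a|]; case: (teval e1 t2) => [b|] //=; rewrite (inj_eq fi).
- rewrite !(tev e1 e2) //.
  by case: (teval e1 t1) => [a|]; case: (teval e1 t2) => [b|] //=; rewrite ef.
- rewrite !(tev e1 e2) //.
  by case: (teval e1 t1) => [a|]; case: (teval e1 t2) => [b|] //=; rewrite !index_map.
- by rewrite (IH e1 e2).
- by rewrite (IHp e1 e2) // (IHq e1 e2).
apply/existsP/existsP => [[v hv] | [v hv]].
  exists (f v); rewrite -(IH (upd e1 x v)) // => y.
  by rewrite /upd; case: (y == x).
case: bf => g fg gf.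
exists (g v); rewrite (IH _ (upd e2 x v)) // => y.
by rewrite /upd; case: (y == x) => //=; rewrite gf.
Qed.

Lemma bft_iso (l : seq (gV G)) : is_BFT l -> is_BFT (map f l).
Proof.
have fi := bij_inj bf.
case: bf => g fg gf.
move=> [[ul al] hl]; split.
  split; first by rewrite map_inj_uniq.
  by move=> v; rewrite -(gf v) map_f.
move=> u v; rewrite -(gf u) -(gf v) !index_map // ef => uv [w [ew vw]] h2.
apply: hl => //.
  by exists (g w); move: ew vw; rewrite -{1 2}(gf w) ef index_map.
move=> u' u'u w' eu'w'.
have := h2 (f u'); rewrite index_map // => /(_ u'u (f w')).
by rewrite ef index_map // => /(_ eu'w').
Qed.
End Iso.

Definition STrue := SEq Tmin Tmin.
Definition SOr f g := SNot (SAnd (SNot f) (SNot g)).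
Definition SNeq t1 t2 := SNot (SEq t1 t2).
Definition isMM t := SOr (SEq t Tmin) (SEq t Tmax).
Definition isC (v : nat -> sterm) :=
  SAnd (SEq (v 0) Tmin) (SAnd (SEq (v 1) Tmin) (SAnd (SEq (v 2) Tmin)
   (SAnd (SEq (v 3) Ts) (SEq (v 4) Tmin)))).
Definition inCopy (v : nat -> sterm) :=
  SAnd (SNot (SAnd (SEq (v 0) Tmin) (SEq (v 1) Tmin))) (SAnd (isMM (v 0)) (isMM (v 1))).
Definition isL v := SAnd (inCopy v) (SAnd (SEq (v 2) Tmin) (SNeq (v 4) Tmin)).
Definition isTopF v := SAnd (inCopy v) (SAnd (SEq (v 2) Tmax) (SAnd (SEq (v 3) Tmax) (SEq (v 4) Tmax))).
Definition DomF v := SOr (isC v) (SOr (isL v) (isTopF v)).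
Definition EorEq t1 t2 := SOr (SEdge t1 t2) (SEq t1 t2).
Definition F1 (x y : nat -> sterm) :=
  SAnd (isC x) (SAnd (isL y) (SAnd (SEq (y 4) (TSucc Tmin)) (EorEq Ts (y 3)))).
Definition F2 (x y : nat -> sterm) :=
  SAnd (isL x) (SAnd (isL y) (SAnd (SEq (x 0) (y 0)) (SAnd (SEq (x 1) (y 1))
   (SAnd (SEq (y 4) (TSucc (x 4))) (SAnd (SNeq (x 4) Tmax) (EorEq (x 3) (y 3))))))).
Definition F3 (x y : nat -> sterm) :=
  SAnd (isL x) (SAnd (isTopF y) (SAnd (SEq (x 0) (y 0)) (SAnd (SEq (x 1) (y 1))
   (SAnd (SEq (x 3) Ts) (SEq (x 4) Tmax))))).
Definition FF x y := SOr (F1 x y) (SOr (F2 x y) (F3 x y)).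
Definition Eqv (x y : nat -> sterm) :=
  SAnd (SEq (x 0) (y 0)) (SAnd (SEq (x 1) (y 1)) (SAnd (SEq (x 2) (y 2))
   (SAnd (SEq (x 3) (y 3)) (SEq (x 4) (y 4))))).
Definition XV (i : nat) := SVar i.
Definition YV (i : nat) := SVar i.+4.+1.
Definition EdgeF := SAnd (SOr (FF XV YV) (FF YV XV)) (SNot (Eqv XV YV)).


Fixpoint tok (b : nat) (t : sterm) := match t with SVar x => x < b | TSucc t => tok b t | _ => true end.
Fixpoint fok (b : nat) (f : sform) := match f with
  | SEq t1 t2 => tok b t1 && tok b t2 | SEdge t1 t2 => tok b t1 && tok b t2
  | SNot f => fok b f | SAnd f g => fok b f && fok b g | SEx _ _ => false end.

Section Sem.
Variable A : sstruct.
Local Notation V := (sV A).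
Local Notation mn := (s_min A).
Local Notation mx := (s_max A).
Local Notation ss := (s_s A).
Local Notation S := (sS A).
Local Notation E := (sE A).

Lemma ssat_ext bd (e1 e2 : nat -> option V) f : fok bd f ->
  (forall x, x < bd -> e1 x = e2 x) -> ssat e1 f = ssat e2 f.
Proof.
move=> hf he.
have ht : forall t, tok bd t -> seval e1 t = seval e2 t.
  by elim=> //= t IH /IH ->.
elim: f hf => //= [t1 t2|t1 t2|f IH|f IHf g IHg] .
- by case/andP => /ht -> /ht ->.
- by case/andP => /ht -> /ht ->.
- by move/IH ->.
- by case/andP => /IHf -> /IHg ->.
Qed.

Definition envA (a : nat -> V) : nat -> option V := fun i => Some (a i).
Definition envAB (a b : nat -> V) : nat -> option V :=
  fun i => if i is i'.+4.+1 then Some (b i') else Some (a i).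

Definition domB a := ssat (envA a) (DomF XV).
Definition edgeB a b := ssat (envAB a b) EdgeF.

Definition tagok (p q : V) :=
  [&& ~~ ((p == mn) && (q == mn)), (p == mn) || (p == mx) & (q == mn) || (q == mx)].
Definition Cb (a : nat -> V) := [&& a 0 == mn, a 1 == mn, a 2 == mn, a 3 == ss & a 4 == mn].
Definition Lb a := [&& tagok (a 0) (a 1), a 2 == mn & a 4 != mn].
Definition Tb a := [&& tagok (a 0) (a 1), a 2 == mx, a 3 == mx & a 4 == mx].
Definition EorEqb x y := E x y || (x == y).
Definition F1b (x y : nat -> V) :=
  [&& Cb x, Lb y, y 4 == S mn & EorEqb ss (y 3)].
Definition F2b (x y : nat -> V) :=
  [&& Lb x, Lb y, x 0 == y 0, x 1 == y 1, y 4 == S (x 4), x 4 != mx & EorEqb (x 3) (y 3)].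
Definition F3b (x y : nat -> V) :=
  [&& Lb x, Tb y, x 0 == y 0, x 1 == y 1, x 3 == ss & x 4 == mx].
Definition FFb x y := [|| F1b x y, F2b x y | F3b x y].
Definition Neqvb (x y : nat -> V) :=
  ~~ [&& x 0 == y 0, x 1 == y 1, x 2 == y 2, x 3 == y 3 & x 4 == y 4].

Lemma orE (x y : bool) : ~~ (~~ x && ~~ y) = x || y.
Proof. by case: x; case: y. Qed.

Lemma domB_E a : domB a = [|| Cb a, Lb a | Tb a].
Proof.
rewrite /domB /DomF /SOr /isC /isL /isTopF /inCopy /isMM /SOr /SNeq /=.
by rewrite /Cb /Lb /Tb /tagok !orE.
Qed.

Lemma edgeB_E a b : edgeB a b = (FFb a b || FFb b a) && Neqvb a b.
Proof.
rewrite /edgeB /EdgeF /FF /F1 /F2 /F3 /Eqv /XV /YV /EorEq /isC /isL /isTopF /inCopy /isMM /SOr /SNeq /=.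
rewrite /FFb /F1b /F2b /F3b /Neqvb /EorEqb /Cb /Lb /Tb /tagok !orE.
done.
Qed.
End Sem.

Definition table : seq (seq cterm) :=
  [:: [:: Cmin; Cmin; Cmin; Cs; Cmin];
      [:: Cmin; Cmax; Cmin; Ct; Cmax];
      [:: Cmax; Cmin; Cmin; Ct; Cmax];
      [:: Cmax; Cmax; Cmin; Ct; Cmax];
      [:: Cmin; Cmax; Cmax; Cmax; Cmax];
      [:: Cmax; Cmin; Cmax; Cmax; Cmax];
      [:: Cmax; Cmax; Cmax; Cmax; Cmax]].
Definition cst (i : 'I_7) (j : 'I_5) : cterm := nth Cmin (nth [::] table i) j.
Definition ipi : interp 5 7 := @Interp 5 7 (DomF XV) EdgeF (fun i => [:: (STrue, cst i)]).

Section Link.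
Variable A : sstruct.
Local Notation V := (sV A).
Definition acc (f : {ffun 'I_5 -> V}) : nat -> V := fun i => f (inord i).

Lemma omap_insub (f : {ffun 'I_5 -> V}) x : x < 5 ->
  omap f (insub x) = Some (f (inord x)).
Proof.
move=> hx; rewrite insubT /=; congr Some; congr (f _).
by apply: val_inj; rewrite /= inordK.
Qed.

Lemma indom_E f : in_dom ipi f = domB (acc f).
Proof.
rewrite /in_dom /domB; apply: (@ssat_ext A 5) => // x hx.
by rewrite /env1 omap_insub.
Qed.

Lemma envAB_lt (a b : nat -> V) x : x < 5 -> envAB a b x = Some (a x).
Proof. by case: x => [|[|[|[|[|x]]]]]. Qed.

Lemma edge_E f g : ssat (env2 f g) (i_edge ipi) = edgeB (acc f) (acc g).
Proof.
rewrite /edgeB; apply: (@ssat_ext A 10) => // x hx.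
rewrite /env2; case: ifP => h.
  by rewrite omap_insub // envAB_lt.
have e5 : forall m, m + 5 = m.+4.+1 by move=> m; rewrite addnC.
have h5 : 5 <= x by rewrite leqNgt h.
have hm : x - 5 < 5 by rewrite ltn_subLR.
by rewrite -{2}(subnK h5) e5 omap_insub.
Qed.

Lemma domB_ext (a a' : nat -> V) : (forall i, i < 5 -> a i = a' i) -> domB a = domB a'.
Proof. by move=> h; rewrite /domB; apply: (@ssat_ext A 5) => // x hx; rewrite /envA h. Qed.

Lemma const_valE (i : 'I_7) j : j < 5 ->
  const_val ipi A i (inord j) = ceval A (nth Cmin (nth [::] table i) j).
Proof.
move=> hj; rewrite /const_val ffunE /= /case_holds /= eqxx /=.
by rewrite /cst inordK.
Qed.

Lemma cases_okE : cases_ok ipi A.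
Proof. by move=> i; rewrite /= /case_holds /= eqxx. Qed.
End Link.

Section Src.
Variables (A : sstruct) (ls : seq (sV A)).
Local Notation V := (sV A).
Local Notation mn := (s_min A).
Local Notation mx := (s_max A).
Local Notation S := (sS A).
Local Notation E := (sE A).
Hypotheses (hu : uniq ls) (hall : forall v, v \in ls)
  (hmin : index mn ls = 0) (hmax : index mx ls = (size ls).-1)
  (hS : forall u, index u ls < (size ls).-1 -> index (S u) ls = (index u ls).+1).
Local Notation N := (size ls).-1.
Local Notation pos v := (index v ls).

Lemma pos_lt v : pos v < size ls. Proof. by rewrite index_mem. Qed.
Lemma pos_le v : pos v <= N.
Proof. by rewrite -ltnS (leq_trans (pos_lt v)) // leqSpred. Qed.
Lemma pos_inj u v : pos u = pos v -> u = v.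
Proof. by move=> h; rewrite -(nth_index u (hall u)) h nth_index. Qed.
Lemma posS v : v != mx -> pos (S v) = (pos v).+1.
Proof.
move=> h; apply: hS; rewrite ltn_neqAle pos_le andbT -hmax.
by apply/eqP => /pos_inj /eqP; rewrite (negbTE h).
Qed.
Definition Inth i := nth mn ls i.
Lemma pos_Inth i : i <= N -> pos (Inth i) = i.
Proof.
move=> hi; rewrite /Inth index_uniq //.
by rewrite (leq_ltn_trans hi) // prednK // (leq_ltn_trans _ (pos_lt mn)).
Qed.
Lemma Inth0 : Inth 0 = mn.
Proof. by apply: pos_inj; rewrite pos_Inth. Qed.
Lemma InthN : Inth N = mx.
Proof. by apply: pos_inj; rewrite pos_Inth // hmax. Qed.
Lemma InthS i : i < N -> S (Inth i) = Inth i.+1.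
Proof.
move=> hi.
have nmx : Inth i != mx.
  apply/eqP => h; have := pos_Inth (ltnW hi); rewrite h hmax => e.
  by rewrite e ltnn in hi.
apply: pos_inj; rewrite posS // !pos_Inth //; exact: ltnW.
Qed.

Fixpoint rwithin (s : V) (m : nat) (v : V) : bool :=
  if m is m'.+1 then rwithin s m' v || [exists u, rwithin s m' u && E u v]
  else v == s.

Lemma rwithin_mono s m m' v : m <= m' -> rwithin s m v -> rwithin s m' v.
Proof.
elim: m' => [|m' IH]; first by rewrite leqn0 => /eqP ->.
rewrite leq_eqVlt => /orP [/eqP -> //|] /IH h w /=; by rewrite h.
Qed.

Lemma connect_rwithin s t : connect E s t -> rwithin s N t.
Proof.
case/connectP => p pp ->.
case: (shortenP pp) => p' pp' up' _.
have : size p' <= N.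
  have := uniq_leq_size up' (fun x _ => hall x).
  by rewrite /= => h; rewrite -ltnS (leq_trans h) // leqSpred.
move=> hsz; apply: (rwithin_mono hsz).
elim/last_ind: p' pp' {up' hsz} => [|q z IH] /=; first by rewrite eqxx.
rewrite rcons_path last_rcons size_rcons => /andP [pq ez] /=.
apply/orP; right; apply/existsP; exists (last s q); by rewrite IH.
Qed.

Hypothesis hmm : mn != mx.
Local Notation ss := (s_s A).
Definition levA (a : nat -> V) := if a 2 == mx then N.+1 else pos (a 4).

Lemma N_gt0 : 0 < N.
Proof.
rewrite -hmax lt0n; apply/negP => /eqP h.
by move: hmm; rewrite -(@pos_inj mn mx) ?eqxx // h hmin.
Qed.

Lemma pos_Smn : pos (S mn) = 1.
Proof. by rewrite posS // hmin. Qed.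

Lemma EA (p q : V) (tg : tagok p q) a b : domB a -> domB b -> edgeB a b ->
  b 0 = p -> b 1 = q ->
  (Cb a /\ levA b = 1 /\ b 2 = mn /\ EorEqb ss (b 3)) \/
  (a 0 = p /\ a 1 = q /\
    ((levA b = (levA a).+1 /\ (b 2 = mn -> a 2 = mn /\ EorEqb (a 3) (b 3)))
     \/ levA a = (levA b).+1)).
Proof.
have nmx : mn == mx = false by apply/negbTE.
have nmx' : mx == mn = false by rewrite eq_sym.
move=> _ _; rewrite edgeB_E /levA => /andP [/orP [hf|hf] _] hb0 hb1; rewrite /FFb in hf.
  case/or3P: hf.
  - case/and4P => ca /and3P [_ /eqP b2 _] /eqP b4 eo; left.
    by rewrite b2 nmx b4 pos_Smn.
  - case/and5P => /and3P [_ /eqP a2 _] /and3P [_ /eqP b2 _] /eqP a0 /eqP a1 /and3P [/eqP b4 a4 eo].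
    right; rewrite a0 a1 hb0 hb1; do 2 split => //; left.
    by rewrite a2 b2 nmx b4 posS.
  - case/and5P => /and3P [_ /eqP a2 _] /and4P [_ /eqP b2 _ _] /eqP a0 /eqP a1 /andP [_ /eqP a4].
    right; rewrite a0 a1 hb0 hb1; do 2 split => //; left.
    rewrite a2 b2 nmx eqxx a4 hmax; split => // h.
    by move: hmm; rewrite -h -b2 eqxx.
case/or3P: hf.
- case/and4P => /and5P [/eqP b0 /eqP b1 _ _ _] _ _ _.
  by move: tg; rewrite /tagok -hb0 -hb1 b0 b1 eqxx.
- case/and5P => /and3P [_ /eqP b2 _] /and3P [_ /eqP a2 _] /eqP a0 /eqP a1 /and3P [/eqP b4 a4 eo].
  right; rewrite -a0 -a1 hb0 hb1; do 2 split => //; right.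
  by rewrite a2 b2 nmx b4 posS.
- case/and5P => /and3P [_ /eqP b2 _] /and4P [_ /eqP a2 _ _] /eqP a0 /eqP a1 /andP [_ /eqP b4].
  right; rewrite -a0 -a1 hb0 hb1; do 2 split => //; right.
  by rewrite a2 b2 nmx eqxx b4 hmax.
Qed.
End Src.
Arguments Inth : simpl never.

Lemma ar1 m d a : m.+1 < d + a.+1 + 2 -> m < d + a + 2. Proof. lia. Qed.
Lemma ar2 m a : a.+1 <= m -> a <= m.+1. Proof. lia. Qed.
Lemma ar3 m a : m - a.+1 <= m.+1 - a. Proof. lia. Qed.
Lemma ar4 m d a : a.+1 <= m -> d <= m - a.+1 -> m.+1 < d + a + 2 -> False. Proof. lia. Qed.
Lemma ar5 d N : N.+1 <= d + N -> d <= d + N - N.+1 -> False. Proof. lia. Qed.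
Lemma ar6 d N : (d + N).+1 < d + N + 2. Proof. lia. Qed.

Section Graph.
Variables (A : sstruct) (ls : seq (sV A)).
Local Notation V := (sV A).
Local Notation mn := (s_min A).
Local Notation mx := (s_max A).
Local Notation S := (sS A).
Local Notation E := (sE A).
Local Notation ss := (s_s A).
Local Notation tt := (s_t A).
Hypotheses (hu : uniq ls) (hall : forall v, v \in ls)
  (hmin : index mn ls = 0) (hmax : index mx ls = (size ls).-1)
  (hS : forall u, index u ls < (size ls).-1 -> index (S u) ls = (index u ls).+1)
  (hmm : mn != mx).
Local Notation N := (size ls).-1.
Local Notation pos v := (index v ls).
Variable HD : forall i, in_dom ipi (const_val ipi A i).
Local Notation G := (interp_struct HD).
Local Notation gv := (gV G).

Definition av (x : gv) : nat -> V := acc (val x).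
Definition tup (x0 x1 x2 x3 x4 : V) : nat -> V := fun i => nth mn [:: x0; x1; x2; x3; x4] i.
Definition agree (a b : nat -> V) := forall i, i < 5 -> a i = b i.

Lemma gE_E x y : gE G x y = edgeB (av x) (av y).
Proof. exact: edge_E. Qed.

Lemma av_dom x : domB (av x).
Proof. by rewrite /av -indom_E; exact: valP x. Qed.

Lemma vert_eq x y : agree (av x) (av y) -> x = y.
Proof.
move=> h; apply: val_inj; apply/ffunP => j.
by have := h j (ltn_ord j); rewrite /av /acc inord_val.
Qed.

Lemma edgeB_ext a a' b b' : agree a a' -> agree b b' -> edgeB a b = edgeB a' b'.
Proof.
move=> ha hb; rewrite /edgeB; apply: (@ssat_ext A 10) => // x hx.
case: (ltnP x 5) => h; first by rewrite !envAB_lt // ha.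
have e5 : forall m, m + 5 = m.+4.+1 by move=> m; rewrite addnC.
have hm : x - 5 < 5 by rewrite ltn_subLR.
by rewrite -(subnK h) e5 /= hb.
Qed.

Lemma agree_c (i : nat) : i < 7 ->
  agree (av (gc G (inord i))) (fun j => ceval A (nth Cmin (nth [::] table i) j)).
Proof. by move=> hi j hj; rewrite /av /acc /= const_valE // inordK. Qed.

Lemma mkV_proof a : domB a -> @in_dom 5 7 ipi A [ffun j : 'I_5 => a j].
Proof.
move=> h; rewrite indom_E -(domB_ext (a := a)) // => i hi.
by rewrite /acc ffunE inordK.
Qed.
Definition mkV a (h : domB a) : gv := @exist _ (fun f => @in_dom 5 7 ipi A f) _ (mkV_proof h).
Lemma av_mkV a (h : domB a) : agree (av (mkV h)) a.
Proof. by move=> i hi; rewrite /av /acc /= ffunE inordK. Qed.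

Lemma gE_sym : symmetric (gE G).
Proof.
move=> x y; rewrite !gE_E !edgeB_E orbC; congr (_ && _).
rewrite /Neqvb; congr (~~ _); by rewrite ![av y _ == _]eq_sym.
Qed.

Lemma gE_irr : irreflexive (gE G).
Proof. by move=> x; rewrite gE_E edgeB_E /Neqvb !eqxx andbF. Qed.

Definition c0 := gc G (inord 0).
Lemma c0E : agree (av c0) (tup mn mn mn ss mn).
Proof.
move=> i hi; rewrite (agree_c (isT : 0 < 7)) //.
by case: i hi => [|[|[|[|[|i]]]]].
Qed.

Lemma nmx : (mn == mx) = false. Proof. exact: negbTE. Qed.
Lemma nmx' : (mx == mn) = false. Proof. by rewrite eq_sym nmx. Qed.

Lemma Inth_neq_mn i : 0 < i -> i <= N -> Inth ls i != mn.
Proof.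
move=> h1 h2; apply/eqP => h; have := pos_Inth hu hall h2.
by rewrite h hmin => e; rewrite -e in h1.
Qed.

Lemma dom_L p q v i : tagok p q -> 0 < i -> i <= N -> domB (tup p q mn v (Inth ls i)).
Proof.
move=> tg h1 h2; rewrite domB_E; apply/or3P; apply: Or32.
by rewrite /Lb /= tg eqxx Inth_neq_mn.
Qed.

Lemma agree_edge x y a b : agree (av x) a -> agree (av y) b -> gE G x y = edgeB a b.
Proof. by move=> hx hy; rewrite gE_E (edgeB_ext hx hy). Qed.

Lemma edge1 p q v y : tagok p q -> EorEqb ss v ->
  agree (av y) (tup p q mn v (Inth ls 1)) -> gE G c0 y.
Proof.
move=> tg eo hy; rewrite (agree_edge c0E hy) edgeB_E.
have N1 := N_gt0 hall hmin hmax hmm.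
have ne := Inth_neq_mn (isT : 0 < 1) N1.
apply/andP; split.
  apply/orP; left; apply/or3P; apply: Or31.
  rewrite /F1b /Cb /Lb /= !eqxx tg ne eo /= andbT.
  by rewrite -(InthS hu hall hmax hS N1) (Inth0 hu hall hmin).
by rewrite /Neqvb /tup /= [mn == Inth _ _]eq_sym (negbTE ne) !andbF.
Qed.

Lemma edge2 p q u v i y y' : tagok p q -> EorEqb u v -> 0 < i -> i < N ->
  agree (av y') (tup p q mn u (Inth ls i)) ->
  agree (av y) (tup p q mn v (Inth ls i.+1)) -> gE G y' y.
Proof.
move=> tg eo h1 h2 hy' hy; rewrite (agree_edge hy' hy) edgeB_E.
have ne := Inth_neq_mn h1 (ltnW h2).
have ne' := Inth_neq_mn (ltn0Sn i) h2.
have nemx : Inth ls i != mx.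
  apply/eqP => h; have := pos_Inth hu hall (ltnW h2).
  by rewrite h hmax => e; rewrite e ltnn in h2.
apply/andP; split.
  apply/orP; left; apply/or3P; apply: Or32.
  rewrite /F2b /Lb /= !eqxx tg ne ne' eo nemx /= andbT.
  by rewrite (InthS hu hall hmax hS h2).
rewrite /Neqvb /tup /=; apply/negP => /and5P [_ _ _ _ /eqP h].
have := pos_Inth hu hall (ltnW h2); rewrite h (pos_Inth hu hall) //.
by move=> /esym /n_Sn.
Qed.

Lemma edge3 p q y y' : tagok p q ->
  agree (av y') (tup p q mn ss mx) ->
  agree (av y) (tup p q mx mx mx) -> gE G y' y.
Proof.
move=> tg hy' hy; rewrite (agree_edge hy' hy) edgeB_E.
apply/andP; split.
  apply/orP; left; apply/or3P; apply: Or33.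
  by rewrite /F3b /Lb /Tb /= !eqxx tg nmx'.
by rewrite /Neqvb /tup /= nmx !andbF.
Qed.


Variables (l : seq gv) (Hl : is_BFT l).
Local Notation idx x := (index x l).

Definition rr := [arg min_(x < c0 | connect (gE G) x c0) idx x].
Lemma rr_spec : connect (gE G) rr c0 /\ forall x, connect (gE G) x c0 -> idx rr <= idx x.
Proof. by rewrite /rr; case: arg_minnP => [|x hx hmn]; [exact: connect0 | split]. Qed.

Lemma rr_restart : restart l rr.
Proof.
move=> w hw; apply/negP => ew.
have := rr_spec.2 _ (connect_trans (connect1 ew) rr_spec.1).
by rewrite leqNgt hw.
Qed.

Lemma idx_rr x : connect (gE G) rr x -> idx rr <= idx x.
Proof.
move=> h; apply: rr_spec.2; rewrite (sym_connect_sym gE_sym) in h.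
exact: connect_trans h rr_spec.1.
Qed.

Definition d0 := ex_minn (connect_within rr_spec.1).
Lemma d0_spec : within rr d0 c0 /\ forall k, within rr k c0 -> d0 <= k.
Proof. by rewrite /d0; case: ex_minnP => m hm hmn; split. Qed.

Section Copy.
Variables (p q : V) (tg : tagok p q).

Lemma Claim : forall i, 0 < i -> i <= N -> forall v, rwithin ss i v ->
  forall y, agree (av y) (tup p q mn v (Inth ls i)) -> within rr (d0 + i) y.
Proof.
have [wd0 _] := d0_spec.
elim=> [//|i IH] _ hi v hv y hy.
case: (posnP i) => [i0 | ipos].
  subst i; move: hv hy => /= /orP [/eqP -> | /existsP [u /andP [/eqP -> euv]]] hy.
    rewrite addn1; apply: within_step wd0 (edge1 tg _ hy).
    by rewrite /EorEqb eqxx orbT.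
  rewrite addn1; apply: within_step wd0 (edge1 tg _ hy).
  by rewrite /EorEqb euv.
have [u [hu' eo]] : exists u, rwithin ss i u /\ EorEqb u v.
  move: hv => /= /orP [hv | /existsP [u /andP [hu' euv]]].
    by exists v; rewrite /EorEqb eqxx orbT.
  by exists u; rewrite /EorEqb euv.
have hd := dom_L u tg ipos (ltnW hi).
have hy' := av_mkV hd.
have w' := IH ipos (ltnW hi) u hu' _ hy'.
rewrite addnS; exact: within_step w' (edge2 tg eo ipos hi hy' hy).
Qed.

Lemma agreeN v y : agree (av y) (tup p q mn v mx) -> agree (av y) (tup p q mn v (Inth ls N)).
Proof. by rewrite (InthN hu hall hmax). Qed.

Lemma T_upper Tv : agree (av Tv) (tup p q mx mx mx) -> within rr (d0 + N).+1 Tv.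
Proof.
move=> hT.
have N1 := N_gt0 hall hmin hmax hmm.
have hd := dom_L ss tg N1 (leqnn N).
have hy' := av_mkV hd.
have w' := Claim N1 (leqnn N) (rwithin_mono (leq0n N) (eqxx ss)) hy'.
apply: within_step w' (edge3 tg _ hT) => i hi.
by rewrite hy' // (InthN hu hall hmax).
Qed.

Lemma t_upper tv : agree (av tv) (tup p q mn tt mx) -> connect E ss tt ->
  within rr (d0 + N) tv.
Proof.
move=> ht hc; have N1 := N_gt0 hall hmin hmax hmm.
have h := Claim N1 (leqnn N) (connect_rwithin hall hc) (agreeN ht); exact: h.
Qed.

Hypothesis clean : ~ (av rr 0 = p /\ av rr 1 = q).

Lemma Inv : forall m y, within rr m y -> av y 0 = p -> av y 1 = q ->
  [/\ levA ls (av y) <= m, within rr (m - levA ls (av y)) c0 &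
      (av y 2 = mn -> m < d0 + levA ls (av y) + 2 -> connect E ss (av y 3))].
Proof.
have [wd0 mind0] := d0_spec.
elim=> [|m IH] y; rewrite ?within0 ?withinS.
  by move/eqP -> => h0 h1; case: clean.
case/orP => [wy | /existsP [z /andP [wz ezy]]] h0 h1.
  have [a b c] := IH y wy h0 h1; split.
  - exact: leq_trans a _.
  - by apply: within_mono b; rewrite leq_sub2r.
  - by move=> h2 h3; apply: c h2 _; apply: ltn_trans h3.
have := EA hall hmin hmax hS hmm tg (av_dom z) (av_dom y) _ h0 h1.
rewrite -gE_E => /(_ ezy) [[cz [ly [y2 eo]]] | [z0 [z1 [[ly hz] | ly]]]].
- have zc : z = c0.
    apply: vert_eq => i hi; rewrite c0E //.
    by case/and5P: cz => /eqP ? /eqP ? /eqP ? /eqP ? /eqP ?; case: i hi => [|[|[|[|[|i]]]]].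
  subst z; rewrite ly subSS subn0; split => // _ _.
  case/orP: eo => [e1 | /eqP <-]; [exact: connect1 | exact: connect0].
- have [a b c] := IH z wz z0 z1.
  rewrite ly subSS; split => // h2 h3.
  have [z2 eo] := hz h2.
  have cz := c z2 (ar1 h3).
  case/orP: eo => [e1 | /eqP <-] //.
  exact: connect_trans cz (connect1 e1).
- have [a b c] := IH z wz z0 z1.
  split.
  + by rewrite ly in a; exact: ar2.
  + by apply: within_mono b; rewrite ly; exact: ar3.
  + move=> _ h3; have := mind0 _ b; rewrite ly in a *.
    by move=> hd; exfalso; exact: ar4 a hd h3.
Qed.

Lemma Test_ok tv Tv : agree (av tv) (tup p q mn tt mx) ->
  agree (av Tv) (tup p q mx mx mx) ->
  ((idx tv < idx Tv) /\ (forall z, idx tv < idx z -> idx z <= idx Tv -> ~ restart l z))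
  <-> connect E ss tt.
Proof.
move=> htv hTv.
have levT : levA ls (av Tv) = N.+1 by rewrite /levA hTv //= eqxx.
have levt : levA ls (av tv) = N by rewrite /levA htv //= nmx htv //= hmax.
have wT := T_upper hTv.
split.
  move=> [lt nr].
  have rT : idx rr <= idx Tv := idx_rr (within_connect wT).
  have rt : idx rr <= idx tv.
    by rewrite leqNgt; apply/negP => h; apply: (nr rr h rT rr_restart).
  have wt := bft_mono Hl rr_restart wT rt (ltnW lt).
  have [_ _ c] := Inv wt (htv 0 isT) (htv 1 isT).
  have := c (htv 2 isT); rewrite levt htv //= => h; apply: h; exact: ar6.
move=> hc; have wt := t_upper htv hc.
have nT : ~~ within rr (d0 + N) Tv.
  apply/negP => w; have [a b _] := Inv w (hTv 0 isT) (hTv 1 isT).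
  rewrite levT in a b; have := d0_spec.2 _ b; exact: ar5.
have rt : idx rr <= idx tv := idx_rr (within_connect wt).
split.
  rewrite ltnNge; apply/negP => h; apply: (negP nT).
  have hh := bft_mono Hl rr_restart wt (idx_rr (within_connect wT)) h; exact: hh.
move=> z h1 h2 rz.
have := within_before Hl rz (leq_ltn_trans rt h1) wT.
by rewrite ltnNge h2.
Qed.
End Copy.
End Graph.

Definition TC (k : nat) : tterm 7 := TConst (inord k).
Definition TOr (f g : tform 7) := TNot (TAnd (TNot f) (TNot g)).
Definition restartF : tform 7 :=
  TNot (TEx 1 (TAnd (TLt (TVar 7 1) (TVar 7 0)) (TEdge (TVar 7 1) (TVar 7 0)))).
Definition TestF (j : nat) : tform 7 :=
  TAnd (TLt (TC j) (TC j.+3))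
   (TNot (TEx 0 (TAnd (TLt (TC j) (TVar 7 0))
      (TAnd (TOr (TLt (TVar 7 0) (TC j.+3)) (TEq (TVar 7 0) (TC j.+3))) restartF)))).
Definition Maj (a b c : tform 7) := TOr (TAnd a b) (TOr (TAnd a c) (TAnd b c)).
Definition phi : tform 7 := TOr (TEq (TC 0) (TC 1)) (Maj (TestF 1) (TestF 2) (TestF 3)).

Definition maj (a b c : bool) := [|| a && b, a && c | b && c].

Section PhiSem.
Variables (G : npgraph 7) (l : seq (gV G)).
Local Notation idx x := (index x l).
Definition cG (k : nat) := gc G (inord k).
Definition testb (j : nat) :=
  (idx (cG j) < idx (cG j.+3)) &&
  ~~ [exists z, (idx (cG j) < idx z) &&
       (~~ (~~ (idx z < idx (cG j.+3)) && (z != cG j.+3)) &&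
        ~~ [exists w, (idx w < idx z) && gE G w z])].

Lemma phi_sem : bsat l phi = (cG 0 == cG 1) || maj (testb 1) (testb 2) (testb 3).
Proof. by rewrite /bsat /phi /= !orE. Qed.
End PhiSem.

Lemma test_iff (G : npgraph 7) (l : seq (gV G)) (Hl : is_BFT l) (tv Tv : gV G) :
  ((index tv l < index Tv l) && ~~ [exists z, (index tv l < index z l) &&
       (~~ (~~ (index z l < index Tv l) && (z != Tv)) &&
        ~~ [exists w, (index w l < index z l) && gE G w z])])
  <-> (index tv l < index Tv l /\ forall z, index tv l < index z l ->
        index z l <= index Tv l -> ~ restart l z).
Proof.
split.
  case/andP => lt /existsPn nz; split => // z h1 h2 rz.
  move/negP: (nz z); apply; rewrite h1 orE /=; apply/andP; split.
    move: h2; rewrite leq_eqVlt => /orP [/eqP h | ->]; last by [].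
    by rewrite (idx_inj Hl h) eqxx orbT.
  apply/existsPn => w; apply/negP => /andP [hw ew].
  by move: (rz w hw); rewrite ew.
move=> [lt nr]; rewrite lt /=; apply/existsPn => z.
apply/negP => /and3P [h1]; rewrite orE => h2 /existsPn h3.
apply: (nr z h1).
  by case/orP: h2 => [/ltnW // | /eqP ->].
move=> w hw; apply/negP => ew; have := h3 w; by rewrite hw ew.
Qed.

Lemma maj1 x r : maj x r r = r. Proof. by case: x; case: r. Qed.
Lemma maj2 x r : maj r x r = r. Proof. by case: x; case: r. Qed.
Lemma maj3 x r : maj r r x = r. Proof. by case: x; case: r. Qed.

Section Main.
Variables (A : sstruct) (ls : seq (sV A)).
Local Notation V := (sV A).
Local Notation mn := (s_min A).
Local Notation mx := (s_max A).
Local Notation S := (sS A).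
Local Notation E := (sE A).
Local Notation ss := (s_s A).
Local Notation tt := (s_t A).
Hypotheses (hu : uniq ls) (hall : forall v, v \in ls)
  (hmin : index mn ls = 0) (hmax : index mx ls = (size ls).-1)
  (hS : forall u, index u ls < (size ls).-1 -> index (S u) ls = (index u ls).+1)
  (hmm : mn != mx).
Variable HD : forall i, in_dom ipi (const_val ipi A i).
Local Notation G := (interp_struct HD).
Variables (l : seq (gV G)) (Hl : is_BFT l).

Lemma testb_ok (j : nat) p q : j < 4 -> tagok p q ->
  ~ (av (rr l) 0 = p /\ av (rr l) 1 = q) ->
  agree (av (cG G j)) (tup p q mn tt mx) ->
  agree (av (cG G j.+3)) (tup p q mx mx mx) ->
  testb l j = connect E ss tt.
Proof.
move=> hj tg cl h1 h2.
have := Test_ok hu hall hmin hmax hS hmm Hl tg cl h1 h2.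
rewrite -(test_iff Hl) => h; apply/idP/idP => [/h //| /h //].
Qed.

Lemma phi_correct : bsat l phi = connect E ss tt.
Proof.
have n1 := nmx hmm; have n2 : (mx == mn) = false by rewrite eq_sym.
have ag : forall i, i < 7 -> forall j, j < 5 ->
    av (cG G i) j = ceval A (nth Cmin (nth [::] table i) j).
  by move=> i hi j hj; rewrite /cG (agree_c HD hi) .
rewrite phi_sem.
have -> : (cG G 0 == cG G 1) = false.
  apply/negP => /eqP h; have := ag 1 isT 1 isT; rewrite -h ag //= => e.
  by rewrite e eqxx in n1.
have mk : forall i p q w3 w4, i < 7 -> nth [::] table i = [:: p; q; w3; w4; Cmax] ->
    agree (av (cG G i)) (tup (ceval A p) (ceval A q) (ceval A w3) (ceval A w4) mx).
  move=> i p q w3 w4 hi ht k hk; rewrite ag // ht.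
  by case: k hk => [|[|[|[|[|k]]]]].
have t1 : agree (av (cG G 1)) (tup mn mx mn tt mx) := mk 1 Cmin Cmax Cmin Ct isT erefl.
have t2 : agree (av (cG G 2)) (tup mx mn mn tt mx) := mk 2 Cmax Cmin Cmin Ct isT erefl.
have t3 : agree (av (cG G 3)) (tup mx mx mn tt mx) := mk 3 Cmax Cmax Cmin Ct isT erefl.
have T1 : agree (av (cG G 4)) (tup mn mx mx mx mx) := mk 4 Cmin Cmax Cmax Cmax isT erefl.
have T2 : agree (av (cG G 5)) (tup mx mn mx mx mx) := mk 5 Cmax Cmin Cmax Cmax isT erefl.
have T3 : agree (av (cG G 6)) (tup mx mx mx mx mx) := mk 6 Cmax Cmax Cmax Cmax isT erefl.
have tg1 : tagok mn mx by rewrite /tagok !eqxx n2 !orbT.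
have tg2 : tagok mx mn by rewrite /tagok !eqxx n2 !orbT.
have tg3 : tagok mx mx by rewrite /tagok !eqxx n2 !orbT.
rewrite /=.
case: (boolP ((av (rr l) 0 == mn) && (av (rr l) 1 == mx))) => [/andP [/eqP r0 /eqP r1] | c1].
  rewrite (testb_ok (j:=2) isT tg2 _ t2 T2); last by rewrite r0 r1 => -[/eqP]; rewrite n1.
  rewrite (testb_ok (j:=3) isT tg3 _ t3 T3); last by rewrite r0 r1 => -[/eqP]; rewrite n1.
  exact: maj1.
have c1' : ~ (av (rr l) 0 = mn /\ av (rr l) 1 = mx).
  by move=> [r0 r1]; move: c1; rewrite r0 r1 !eqxx.
rewrite (testb_ok (j:=1) isT tg1 c1' t1 T1).
case: (boolP ((av (rr l) 0 == mx) && (av (rr l) 1 == mn))) => [/andP [/eqP r0 /eqP r1] | c2].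
  rewrite (testb_ok (j:=3) isT tg3 _ t3 T3); last by rewrite r0 r1 => -[_ /eqP]; rewrite n1.
  exact: maj2.
have c2' : ~ (av (rr l) 0 = mx /\ av (rr l) 1 = mn).
  by move=> [r0 r1]; move: c2; rewrite r0 r1 !eqxx.
rewrite (testb_ok (j:=2) isT tg2 c2' t2 T2).
exact: maj3.
Qed.
End Main.

Section Fin.
Variable A : sstruct.
Local Notation V := (sV A).
Local Notation mn := (s_min A).
Local Notation mx := (s_max A).

Lemma one_elt ls : uniq ls -> (forall v, v \in ls) -> index mn ls = 0 ->
  index mx ls = (size ls).-1 -> mn = mx -> forall v : V, v = mn.
Proof.
move=> hu hall hmin hmax e v.
have : index v ls <= (size ls).-1.
  by rewrite -ltnS (leq_trans _ (leqSpred _)) // index_mem.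
rewrite -hmax -e hmin leqn0 => /eqP h.
by rewrite -(nth_index mn (hall v)) h -hmin nth_index.
Qed.

Lemma HD_exists (HA : D2S A) : forall i, in_dom ipi (const_val ipi A i).
Proof.
case: HA => ls [hu hall [hmin hmax] hS hSm] i.
rewrite indom_E -(domB_ext (a := fun j => ceval A (nth Cmin (nth [::] table i) j))); last first.
  by move=> j hj; rewrite /acc const_valE.
rewrite domB_E.
case: (eqVneq mn mx) => [e | ne].
  have oe := one_elt hu hall hmin hmax e.
  apply/orP; left; rewrite /Cb.
  have eqall : forall x y : V, x == y by move=> x y; rewrite (oe x) (oe y) eqxx.
  by rewrite !eqall.
have n1 : (mn == mx) = false by apply/negbTE.
have n2 : (mx == mn) = false by rewrite eq_sym.
case: i => [[|[|[|[|[|[|[|i]]]]]]] hi] //=;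
  by rewrite /Cb /Lb /Tb /tagok /= ?eqxx ?n1 ?n2.
Qed.
End Fin.

Lemma phi_all A (HA : D2S A) (HD : forall i, in_dom ipi (const_val ipi A i))
  (l : seq (gV (interp_struct HD))) : is_BFT l ->
  bsat l phi = connect (sE A) (s_s A) (s_t A).
Proof.
move=> Hl.
case: HA => ls [hu hall [hmin hmax] hS hSm].
case: (eqVneq (s_min A) (s_max A)) => [e | ne].
  have oe := one_elt hu hall hmin hmax e.
  rewrite [s_t A]oe [s_s A]oe connect0 phi_sem.
  have -> : cG (interp_struct HD) 0 = cG (interp_struct HD) 1.
    by apply: vert_eq => j hj; rewrite (oe (av _ j)) (oe (av (cG _ 1) j)).
  by rewrite eqxx.
exact: phi_correct hu hall hmin hmax hS ne HD l Hl.
Qed.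

Definition Gp (G : npgraph 7) : Prop :=
  is_graph G /\ forall l l' : seq (gV G), is_BFT l -> is_BFT l' -> bsat l phi = bsat l' phi.

Theorem corollary1 : bft_definable D2S reach_query.
Proof.
apply: bftd_basic.
exists 7, Gp, phi, 5, ipi; split.
- by move=> G [].
- move=> G1 H1 l1 l2 [_ h1] [_ h2] b1 b2 [f [bf ef cf]].
  suff -> : bsat l1 phi = bsat l2 phi by [].
  rewrite /bsat (@tsat_iso _ _ _ _ bf ef cf l1 phi _ (tenv0 H1)) //.
  exact: h2 (bft_iso bf ef b1) b2.
- move=> A HA; split; first exact: cases_okE.
  exists (HD_exists HA); split.
    split; [exact: gE_irr | exact: gE_sym].
  by move=> l l' b b'; rewrite !phi_all.
move=> A HA H.
have [l Hl] := bft_exists (interp_struct H).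
rewrite /reach_query; split => [hr | [l' [Hl' hb]]].
  by exists l; split => //; rewrite phi_all.
by rewrite phi_all in hb.
Qed.
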